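(* Consider a direct channel Omega implementation on a fully connected network of $n$ processes in which, in each round, each directed channel is timely independently with probability $p<1$, independently across rounds. Then the leader stability time tends to $0$ exponentially fast as $n\to\infty$. Moreover, if the leader stability time is to remain above a fixed constant $E>0$ as $n$ grows, then the channel timeliness probability $p=p_n$ must converge to $1$ exponentially fast as $n\to\infty$.
   Context: A network has $n$ processes and a directed channel from every process to every other. Time is divided into rounds; in each round every directed channel is timely with probability $p$, independently of other channels and of other rounds. In a direct channel (single-hop) Omega implementation, a process can be the leader in a round only if, in that round, it has a timely direct channel to every other process. For a fixed process $x$, let $X$ be the number $r\ge 0$ of consecutive rounds during which $x$ retains timely direct channels to all other processes before the property first fails, so that $\mathbb{P}(X=r)=q^r(1-q)$ with $q=p^{n-1}$. The leader stability time is $\mathbb{E}(X)$. *)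

(* Defs.v *)
From mathcomp Require Import all_boot all_order all_algebra.
From mathcomp Require Import all_classical all_reals all_analysis.
Set Implicit Arguments. Unset Strict Implicit. Unset Printing Implicit Defensive.
Import Order.TTheory GRing.Theory Num.Theory.
Local Open Scope ring_scope.

(* Probability that a fixed process x has timely direct channels to all
   other n-1 processes in one round: q = p^(n-1). *)
Definition all_timely_prob {R : realType} (p : R) (n : nat) : R := p ^+ n.-1.

Definition stab_pmf {R : realType} (p : R) (n : nat) (r : nat) : R :=
  (all_timely_prob p n) ^+ r * (1 - all_timely_prob p n).

Definition leader_stability_time {R : realType} (p : R) (n : nat) : \bar R :=
  (\sum_(0 <= r <oo) ((r%:R * stab_pmf p n r)%:E))%E.

(* Main.v *)
Require Import Defs.
From mathcomp Require Import all_boot all_order all_algebra.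
From mathcomp Require Import all_classical all_reals all_analysis.
From mathcomp Require Import ring lra zify.
Import Order.TTheory GRing.Theory Num.Theory.
Import numFieldNormedType.Exports.
Local Open Scope classical_set_scope.
Local Open Scope ring_scope.

Lemma psum_id {R : realType} (q : R) (m : nat) :
  (1 - q) * (\sum_(0 <= r < m) (r%:R * (q ^+ r * (1 - q))) + m%:R * q ^+ m)
  = q - q ^+ m.+1.
Proof.
elim: m => [|m IH]; first by rewrite big_nil !mulr0n mul0r addr0 mulr0 expr1 subrr.
rewrite big_nat_recr //= -natr1.
rewrite !exprS in IH *.
have -> : (1 - q) * (\sum_(0 <= i < m) i%:R * (q ^+ i * (1 - q)) +
   m%:R * (q ^+ m * (1 - q)) + (m%:R + 1) * (q * q ^+ m)) =
   (1 - q) * (\sum_(0 <= i < m) i%:R * (q ^+ i * (1 - q)) + m%:R * q ^+ m)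
   + (1 - q) * (q * q ^+ m) by ring.
rewrite IH; ring.
Qed.

Lemma lst_ub (R : realType) (p : R) (n : nat) :
  0 <= all_timely_prob p n < 1 ->
  (leader_stability_time p n <=
    (all_timely_prob p n / (1 - all_timely_prob p n))%:E)%E.
Proof.
move=> /andP[q0 q1].
rewrite /leader_stability_time.
apply: lime_le.
  apply: is_cvg_nneseries => k _ _; rewrite lee_fin /stab_pmf.
  apply: mulr_ge0 => //; apply: mulr_ge0; [exact: exprn_ge0|by rewrite subr_ge0 ltW].
apply: nearW => m.
rewrite /= sumEFin lee_fin /stab_pmf.
set q := all_timely_prob p n in q0 q1 *.
have hq : 0 < 1 - q by rewrite subr_gt0.
rewrite ler_pdivlMr //.
have := psum_id q m.
have : 0 <= m%:R * q ^+ m by rewrite mulr_ge0 // exprn_ge0.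
have : 0 <= q ^+ m.+1 by rewrite exprn_ge0.
set S := \sum_(0 <= r < m) _.
move=> h1 h2 h3.
nra.
Qed.

Lemma lst_one (R : realType) (p : R) (n : nat) :
  all_timely_prob p n = 1 -> leader_stability_time p n = 0%E.
Proof.
move=> h; rewrite /leader_stability_time eseries0 // => i _ _.
by rewrite /stab_pmf h subrr mulr0 mulr0.
Qed.

Lemma pow_bound (R : realType) (p : R) (k : nat) :
  0 <= p <= 1 -> p ^+ k * (1 + k%:R * (1 - p)) <= 1.
Proof.
move=> /andP[p0 p1].
elim: k => [|k IH]; first by rewrite expr0 mul0r addr0 mulr1.
rewrite exprS -natr1.
have g0 : 0 <= p ^+ k by exact: exprn_ge0.
have k0 : 0 <= k%:R :> R by [].
have f0 : 0 <= p ^+ k * (k%:R * (1 - p)) by rewrite mulr_ge0 // mulr_ge0 // subr_ge0.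
set g := p ^+ k in g0 f0 IH *.
set K := (k%:R : R) in k0 f0 IH *.
have h1 : 0 <= p * (1 - p) * (g * (K * (1 - p))).
  by rewrite mulr_ge0 // mulr_ge0 // subr_ge0.
have h2 : 0 <= (1 - p) ^+ 2 * (g * (1 + K * (1 - p))).
  by rewrite mulr_ge0 ?exprn_ge0 ?subr_ge0 // mulr_ge0 // addr_ge0 // mulr_ge0 // subr_ge0.
nra.
Qed.

Lemma part1 (R : realType) (p : R) : 0 <= p -> p < 1 ->
     exists C : R, exists a : R, [/\ 0 < C, 0 < a, a < 1 &
       forall n : nat, (2 <= n)%N ->
         (leader_stability_time p n <= (C * a ^+ n)%:E)%E].
Proof.
move=> p0 p1.
set a := (p + 1) / 2.
have a0 : 0 < a by rewrite /a; lra.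
have a1 : a < 1 by rewrite /a; lra.
have pa : p <= a by rewrite /a; lra.
have hp : 0 < 1 - p by lra.
exists ((1 - p) * a)^-1, a; split => //; first by rewrite invr_gt0 mulr_gt0.
case=> [|[|k]] // _.
set q := all_timely_prob p k.+2.
have qe : q = p ^+ k.+1 by [].
have q0 : 0 <= q by rewrite qe exprn_ge0.
have qp : q <= p by rewrite qe ler_iXnr // ltW.
have qa : q <= a ^+ k.+1 by rewrite qe lerXn2r // nnegrE ltW.
have q1 : q < 1 by lra.
apply: le_trans; first by apply: lst_ub; apply/andP; split.
rewrite lee_fin.
have hq : 0 < 1 - q by lra.
rewrite ler_pdivrMr // exprS.
have -> : ((1 - p) * a)^-1 * (a * a ^+ k.+1) * (1 - q)
   = a ^+ k.+1 * (1 - q) / (1 - p).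
  by field; rewrite (gt_eqF hp) (gt_eqF a0).
rewrite -/q ler_pdivlMr //.
have g0 : 0 <= a ^+ k.+1 by rewrite exprn_ge0 // ltW.
set A := a ^+ k.+1 in qa g0 *.
have h1 : 0 <= (A - q) * (1 - p) by rewrite mulr_ge0 // subr_ge0 // ltW.
have h2 : 0 <= A * (p - q) by rewrite mulr_ge0 // subr_ge0.
nra.
Qed.

Lemma part2 (R : realType) (E : R) (p : nat -> R) (N : nat) : 0 < E ->
     (forall n, 0 <= p n <= 1) ->
     (forall n, (N <= n)%N -> (E%:E <= leader_stability_time (p n) n)%E) ->
     p @ \oo --> (1 : R) /\
     exists c : R, [/\ 0 < c, c <= 1 &
       forall n : nat, (N <= n)%N -> (2 <= n)%N ->
         c `^ ((n.-1)%:R)^-1 <= p n].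
Proof.
move=> E0 hp hE.
set c := E / (1 + E).
have c0 : 0 < c by rewrite /c divr_gt0 //; lra.
have c1 : c < 1 by rewrite /c ltr_pdivrMr; lra.
have key : forall n, (N <= n)%N -> c <= p n ^+ n.-1.
  move=> n Nn.
  have := hE n Nn.
  have /andP[p0 p1] := hp n.
  have q0 : 0 <= p n ^+ n.-1 by exact: exprn_ge0.
  have q1 : p n ^+ n.-1 <= 1 by exact: exprn_ile1.
  have [qe|qlt] := eqVneq (p n ^+ n.-1) 1.
    rewrite lst_one //; rewrite lee_fin; lra.
  have qlt1 : p n ^+ n.-1 < 1 by rewrite lt_neqAle qlt q1.
  move=> h; have := le_trans h (@lst_ub _ (p n) n _).
  rewrite /all_timely_prob q0 qlt1 => /(_ isT); rewrite lee_fin.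
  have hq : 0 < 1 - p n ^+ n.-1 by lra.
  rewrite ler_pdivlMr // => h2.
  rewrite /c ler_pdivrMr; last lra.
  set Q := p n ^+ n.-1 in q0 q1 h2 hq qlt1 *.
  lra.
split; last first.
  exists c; split => //; first exact: ltW.
  move=> n Nn n2.
  have k0 : 0 < (n.-1)%:R :> R by rewrite ltr0n; case: n n2 {Nn} => [|[|]].
  have /andP[p0 p1] := hp n.
  have := key n Nn; rewrite -powR_mulrn // => h.
  have := ge0_ler_powR (r := ((n.-1)%:R)^-1) _ _ _ h.
  rewrite -powRrM mulfV ?gt_eqF // powRr1 //; apply.
  - by rewrite invr_ge0 ltW.
  - by rewrite nnegrE ltW.
  - by rewrite nnegrE powR_ge0.
apply/cvgrPdist_le => e e0.
set M := Num.Def.archi_bound ((1 - c) / (c * e)).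
have hM : (1 - c) / (c * e) < M%:R.
  by apply: archi_boundP; apply: divr_ge0; [lra | apply: mulr_ge0; lra].
near=> n.
have /andP[p0 p1] := hp n.
have Nn : (N <= n)%N by near: n; exists N.
have Mn : (M.+1 <= n)%N by near: n; exists M.+1.
have Mk : (M%:R <= (n.-1)%:R :> R) by rewrite ler_nat; lia.
have := key n Nn.
have := @pow_bound _ (p n) n.-1 (hp n).
set Q := p n ^+ n.-1; set K := (n.-1)%:R : R => hb hc.
have ce : 0 < c * e by rewrite mulr_gt0.
move: hM; rewrite ltr_pdivrMr // => hM.
have h1 : c * (1 + K * (1 - p n)) <= 1.
  apply: le_trans hb; rewrite ler_wpM2r //.
  by rewrite addr_ge0 // mulr_ge0 // subr_ge0.
have h2 : (1 - c) <= K * (c * e).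
  by apply: le_trans (ltW hM) _; rewrite ler_wpM2r // ltW.
rewrite ger0_norm ?subr_ge0 //.
have h3 : 0 < K.
  rewrite lt_neqAle ler0n andbT; apply/eqP => K0; rewrite -K0 mul0r in h2; lra.
have h4 : K * c * (1 - p n) <= K * c * e by nra.
by rewrite -(@ler_pM2l _ (K * c)) ?(mulr_gt0 h3 c0).
Unshelve. all: end_near.
Qed.

Theorem theorem3 (R : realType) :
  (* (1) for fixed p in [0,1), E(X) -> 0 exponentially fast in n *)
  (forall p : R, 0 <= p -> p < 1 ->
     exists C : R, exists a : R, [/\ 0 < C, 0 < a, a < 1 &
       forall n : nat, (2 <= n)%N ->
         (leader_stability_time p n <= (C * a ^+ n)%:E)%E])
  /\
  (* (2) if E(X) stays above E > 0 for all large n, then p_n -> 1 at the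
     exponential-root rate p_n >= c^(1/(n-1)) for some constant c in (0,1] *)
  (forall (E : R) (p : nat -> R) (N : nat), 0 < E ->
     (forall n, 0 <= p n <= 1) ->
     (forall n, (N <= n)%N -> (E%:E <= leader_stability_time (p n) n)%E) ->
     p @ \oo --> (1 : R) /\
     exists c : R, [/\ 0 < c, c <= 1 &
       forall n : nat, (N <= n)%N -> (2 <= n)%N ->
         c `^ ((n.-1)%:R)^-1 <= p n]).
Proof.
split; [exact: part1 | exact: part2].
Qed.
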